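(* Let $w\in\mathcal W$, $u,\delta\in\mathcal X^*$ with $\|u\|_*\ne0$ and $\|u+\delta\|_*\ne0$, and $\eta>0$. Then $$\Big\langle u,P\Big(w,\frac{u+\delta}{\|u+\delta\|_*},\eta\Big)\Big\rangle\ge\frac14\Big\langle u,P\Big(w,\frac{u}{\|u\|_*},\frac\eta2\Big)\Big\rangle-2\|\delta\|_*.$$
   Context: $(\mathcal X,\|\cdot\|)$ is a reflexive Banach space with dual $(\mathcal X^*,\|\cdot\|_* )$, $\|u\|_*=\sup_{\|x\|\le1}\langle u,x\rangle$, and $\langle\cdot,\cdot\rangle$ the duality pairing. $\mathcal W\subseteq\mathcal X$ is nonempty, closed and convex. Mirror map: $\Phi:\mathcal D\to\mathbb R\cup\{+\infty\}$, $\mathcal D\subseteq\mathcal X$, proper, weakly lower semicontinuous, $1$-strongly convex on $\mathcal W\subseteq\mathrm{int}(\mathcal D)$ with respect to $\|\cdot\|$, and Gâteaux differentiable on $\mathcal W$. Bregman divergence $D_\Phi(x,y)=\Phi(x)-\Phi(y)-\langle\nabla\Phi(y),x-y\rangle$. Proximal gradient mapping: for $w\in\mathcal W$, $u\in\mathcal X^*$, $\eta>0$, $P(w,u,\eta)=(w-w^+)/\eta$ where $w^+=\arg\min_{w'\in\mathcal W}\{\langle\eta u,w'\rangle+D_\Phi(w',w)\}$ (this minimizer exists and is unique). *)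

(* Defs.v *)
From HB Require Import structures.
From mathcomp Require Import all_boot all_order all_algebra.
From mathcomp Require Import all_classical all_reals all_analysis.
Set Implicit Arguments. Unset Strict Implicit. Unset Printing Implicit Defensive.
Import Order.TTheory GRing.Theory Num.Theory.
Import numFieldNormedType.Exports.
Local Open Scope classical_set_scope.
Local Open Scope ring_scope.

Section Defs.
Variables (R : realType) (X : normedModType R).

Definition is_dual (u : X -> R) : Prop :=
  (forall (a : R) (x y : X), u (a *: x + y) = a * u x + u y) /\ continuous u.

Definition dnorm (u : X -> R) : R := sup [set u x | x in [set x : X | `|x| <= 1]].

(* Reflexivity: the canonical embedding X -> X^** is surjective, i.e. every
   bounded linear functional on X^* is evaluation at some point of X. *)
Definition reflexive_space : Prop :=
  forall phi : (X -> R) -> R,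
    (forall (a : R) (f g : X -> R), is_dual f -> is_dual g ->
       phi (fun x => a * f x + g x) = a * phi f + phi g) ->
    (exists C : R, forall f, is_dual f -> `|phi f| <= C * dnorm f) ->
    exists x : X, forall f, is_dual f -> phi f = f x.

Definition weakly_open (A : set X) : Prop :=
  forall x, A x -> exists (n : nat) (F : 'I_n -> X -> R) (e : R),
    0 < e /\ (forall i, is_dual (F i)) /\
    [set y | forall i, `|F i y - F i x| < e] `<=` A.

Definition weakly_closed (C : set X) : Prop := weakly_open (~` C).

Definition proper_on (D : set X) (Phi : X -> \bar R) : Prop :=
  (exists x, D x /\ (Phi x < +oo)%E) /\ (forall x, D x -> Phi x != -oo%E).

Definition weakly_lsc_on (D : set X) (Phi : X -> \bar R) : Prop :=
  forall t : R, exists C : set X, weakly_closed C /\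
    [set x | D x /\ (Phi x <= t%:E)%E] = D `&` C.

Definition strongly_convex1_on (W : set X) (Phi : X -> \bar R) : Prop :=
  forall x y (t : R), W x -> W y -> 0 <= t <= 1 ->
    (Phi (t *: x + (1 - t) *: y)%R <=
       t%:E * Phi x + (1 - t)%:E * Phi y - (t * (1 - t) / 2 * `|x - y| ^+ 2)%:E)%E.

Definition gateaux_deriv (Phi : X -> \bar R) (y : X) (g : X -> R) : Prop :=
  is_dual g /\ Phi y \is a fin_num /\
  forall v : X,
    (\forall t \near (0 : R), Phi (y + t *: v) \is a fin_num) /\
    ((fun t : R => (fine (Phi (y + t *: v)) - fine (Phi y)) / t) @ (0 : R)^'
       --> g v).

Definition bregman (Phi : X -> \bar R) (gradPhi : X -> X -> R) (x y : X) : \bar R :=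
  (Phi x - Phi y - (gradPhi y (x - y)%R)%:E)%E.

Definition is_prox_point (W : set X) (Phi : X -> \bar R) (gradPhi : X -> X -> R)
  (w : X) (u : X -> R) (eta : R) (wp : X) : Prop :=
  W wp /\ forall w', W w' ->
    ((eta * u wp)%:E + bregman Phi gradPhi wp w <=
       (eta * u w')%:E + bregman Phi gradPhi w' w)%E.

(* the proximal gradient mapping P(w,u,eta) = (w - w^+)/eta *)
Definition prox_grad (w wp : X) (eta : R) : X := eta^-1 *: (w - wp).

End Defs.

(* Main.v *)
Require Import Defs.
From HB Require Import structures.
From mathcomp Require Import all_boot all_order all_algebra.
From mathcomp Require Import all_classical all_reals all_analysis.
From mathcomp Require Import ring lra.
Import Order.TTheory GRing.Theory Num.Theory.
Import numFieldNormedType.Exports.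
Local Open Scope classical_set_scope.
Local Open Scope ring_scope.

Set Implicit Arguments.
Section Helpers.
Variables (R : realType) (X : normedModType R).

Definition lin (f : X -> R) := forall (a : R) (x y : X), f (a *: x + y) = a * f x + f y.

Lemma lin0 f : lin f -> f 0 = 0.
Proof. move=> h; have := h 1 0 0; rewrite scale1r addr0 mul1r => e.
by apply: (addrI (f 0)); rewrite addr0 -e. Qed.

Lemma linZ f a x : lin f -> f (a *: x) = a * f x.
Proof. by move=> h; have := h a x 0; rewrite addr0 lin0 // addr0. Qed.

Lemma linD f x y : lin f -> f (x + y) = f x + f y.
Proof. by move=> h; have := h 1 x y; rewrite scale1r mul1r. Qed.

Lemma linN f x : lin f -> f (- x) = - f x.
Proof. by move=> h; rewrite -scaleN1r linZ // mulN1r. Qed.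

Lemma linB f x y : lin f -> f (x - y) = f x - f y.
Proof. by move=> h; rewrite linD // linN. Qed.

Lemma dual_bounded f : is_dual f -> exists M, forall x : X, `|x| <= 1 -> `|f x| <= M.
Proof.
move=> [hl hc].
have f0 := lin0 hl.
have := cvgr_dist_lt _ _ (hc 0) _ (@ltr01 R).
rewrite f0 => hn; have := proj1 (nbhs_normP _ _) (hn (nbhs_filter _)).
case=> r /= r0 hr.
exists (2 / r) => x x1.
have hy : ball_ Num.Def.normr (0 : X) r ((r / 2) *: x).
  rewrite /ball_ /=.
rewrite sub0r normrN normrZ ger0_norm ?divr_ge0 ?ltW //.
  have : r / 2 * `|x| <= r / 2 by have := normr_ge0 x; nra.
  move=> h; apply: (le_lt_trans h); lra.
have := hr _ hy; rewrite sub0r normrN linZ // normrM ger0_norm; last by rewrite divr_ge0 // ltW.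
move=> h; rewrite ler_pdivlMr //.
have : r / 2 * `|f x| <= 1 by apply: ltW.
move=> h2; nra.
Qed.


Definition bnd (f : X -> R) := exists M, forall x : X, `|x| <= 1 -> `|f x| <= M.

Lemma dnorm_ub f x : lin f -> bnd f -> `|x| <= 1 -> f x <= dnorm f.
Proof.
move=> hl [M hM] x1; apply: ub_le_sup; last by exists x.
exists M => _ [y y1 <-]; exact: le_trans (ler_norm _) (hM _ y1).
Qed.

Lemma dnorm_ge0 f : lin f -> bnd f -> 0 <= dnorm f.
Proof. by move=> hl hb; rewrite -(lin0 hl); apply: dnorm_ub; rewrite // normr0. Qed.

Lemma dnorm_le f c : lin f -> (forall x : X, `|x| <= 1 -> f x <= c) -> dnorm f <= c.
Proof.
move=> hl hc; apply: ge_sup.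
  by exists (f 0), 0 => //=; rewrite normr0.
by move=> _ [y y1 <-]; exact: hc.
Qed.

Lemma dual_le f y : lin f -> bnd f -> `|f y| <= dnorm f * `|y|.
Proof.
move=> hl hb.
have [->|y0] := eqVneq y 0.
  by rewrite lin0 // normr0 normr0 mulr0.
have n0 : 0 < `|y| by rewrite normr_gt0.
set n := `|y| in n0 *.
have z1 : `|n^-1 *: y| <= 1.
  by rewrite normrZ -/n ger0_norm ?mulVf ?gt_eqF // invr_ge0 ltW.
have nz1 : `|- (n^-1 *: y)| <= 1 by rewrite normrN.
have h1 := @dnorm_ub f _ hl hb z1.
have h2 := @dnorm_ub f _ hl hb nz1.
rewrite linN // linZ // in h2; rewrite linZ // in h1.
have e : f y = n * (n^-1 * f y) by rewrite mulrA mulfV ?gt_eqF // mul1r.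
rewrite e normrM (ger0_norm (ltW n0)) [X in _ <= X]mulrC ler_pM2l //.
by rewrite ler_norml h1 andbT lerNl.
Qed.


Lemma lin_add f g : lin f -> lin g -> lin (fun x => f x + g x).
Proof. by move=> hf hg a x y; rewrite hf hg; ring. Qed.

Lemma bnd_add f g : bnd f -> bnd g -> bnd (fun x => f x + g x).
Proof.
move=> [M1 h1] [M2 h2]; exists (M1 + M2) => x x1.
by apply: le_trans (ler_normD _ _) _; apply: lerD; auto.
Qed.

Lemma dnorm_add_le f g : lin f -> lin g -> bnd f -> bnd g ->
  dnorm (fun x => f x + g x) <= dnorm f + dnorm g.
Proof.
move=> hf hg bf bg; apply: dnorm_le; first exact: lin_add.
by move=> x x1; apply: lerD; apply: dnorm_ub.
Qed.

Lemma dnorm_sub_le f g : lin f -> lin g -> bnd f -> bnd g ->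
  dnorm f <= dnorm (fun x => f x + g x) + dnorm g.
Proof.
move=> hf hg bf bg; apply: dnorm_le => // x x1.
have -> : f x = (f x + g x) + g (- x) by rewrite linN //; ring.
apply: lerD; first by apply: (@dnorm_ub _ _ (lin_add hf hg) (bnd_add bf bg)).
by apply: dnorm_ub; rewrite ?normrN.
Qed.


Lemma convW (W : set X) : convex_set W -> forall x y (t : R), W x -> W y -> 0 <= t <= 1 ->
  W (t *: x + (1 - t) *: y).
Proof.
move=> hc x y t wx wy /andP[t0 t1].
have := hc x y (Itv01 t0 t1) (mem_set wx) (mem_set wy).
by rewrite inE.
Qed.

End Helpers.
Arguments lin {R X} f.
Arguments bnd {R X} f.

Section Phi.
Variables (R : realType) (X : normedModType R).
Variables (W : set X) (Phi : X -> \bar R).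
Hypothesis hWcv : convex_set W.
Hypothesis hsc : strongly_convex1_on W Phi.
Hypothesis hfin : forall y, W y -> Phi y \is a fin_num.

Local Notation phi := (fun x => fine (Phi x)).

Lemma sc_real x y (t : R) : W x -> W y -> 0 <= t <= 1 ->
  phi (t *: x + (1 - t) *: y) <=
    t * phi x + (1 - t) * phi y - t * (1 - t) / 2 * `|x - y| ^+ 2.
Proof.
move=> wx wy t01.
have wp := convW hWcv x y t wx wy t01.
have := @hsc x y t wx wy t01.
rewrite -(fineK (hfin wp)) -(fineK (hfin wx)) -(fineK (hfin wy)).
by rewrite -!EFinM -EFinD lee_fin.
Qed.


Lemma growth (h : X -> R) z : lin h -> W z ->
  (forall x, W x -> phi z + h z <= phi x + h x) ->
  forall x, W x -> phi z + h z + `|x - z| ^+ 2 / 2 <= phi x + h x.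
Proof.
move=> hl wz hmin x wx; apply/ler_addgt0Pr => e e0.
set N := `|x - z| ^+ 2.
have N0 : 0 <= N by rewrite /N exprn_ge0.
set t := e / (N / 2 + e).
have d0 : 0 < N / 2 + e by lra.
have t0 : 0 < t by rewrite /t divr_gt0.
have t1 : t <= 1 by rewrite /t ler_pdivrMr // mul1r; lra.
have tc : t * (N / 2) <= e.
  by rewrite /t mulrAC ler_pdivrMr //; nra.
have t01 : 0 <= t <= 1 by rewrite t1 ltW.
have h2 := hmin _ (convW hWcv x z t wx wz t01).
have h1 := @sc_real x z t wx wz t01.
have hp : h (t *: x + (1 - t) *: z) = t * h x + (1 - t) * h z.
  by rewrite linD // !(@linZ _ _ h _ _ hl).
rewrite hp in h2.
have k : t * (phi z + h z + (1 - t) * N / 2 - phi x - h x) <= 0.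
  rewrite -/N in h1; nra.
have k2 : phi z + h z + (1 - t) * N / 2 - phi x - h x <= 0.
  by move: k; rewrite pmulr_rle0.
nra.
Qed.


Lemma grad_ineq (G : X -> R) w x : W w -> W x -> gateaux_deriv Phi w G ->
  G (x - w) <= phi x - phi w.
Proof.
move=> ww wx [_ [_ hd]].
have [_ hc] := hd (x - w).
have hr := cvg_dnbhs_at_right hc.
apply: (ler_cvg_to hr (cvg_cst (phi x - phi w))).
near=> t.
have t0 : 0 < t by near: t; exact: nbhs_right_gt.
have t1 : t < 1 by near: t; exact: nbhs_right_lt.
have e : w + t *: (x - w) = t *: x + (1 - t) *: w.
  by rewrite scalerBr scalerBl scale1r addrCA.
have t01 : 0 <= t <= 1 by rewrite !ltW.
have := @sc_real x w t wx ww t01.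
rewrite -e => h.
rewrite ler_pdivrMr //.
have N0 : 0 <= `|x - w| ^+ 2 by rewrite exprn_ge0.
nra.
Unshelve. all: by end_near.
Qed.


Lemma prox_real (gradPhi : X -> X -> R) w (v : X -> R) eta z : W w ->
  lin (gradPhi w) -> is_prox_point W Phi gradPhi w v eta z ->
  W z /\ forall x, W x -> phi z + (eta * v z - gradPhi w z) <= phi x + (eta * v x - gradPhi w x).
Proof.
move=> ww hG [wz hm]; split => // x wx.
have := hm x wx.
rewrite /bregman -(fineK (hfin wz)) -(fineK (hfin ww)) -(fineK (hfin wx)).
rewrite -!EFinB -!EFinD lee_fin (linB _ _ hG) (linB _ _ hG).
move=> h; lra.
Qed.

End Phi.

Lemma key (R : realType) (a b d eta r V Q Dy : R) : 0 < a -> 0 < b -> 0 <= d -> 0 < eta ->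
  0 <= r -> a <= b + d -> b <= a + d -> `|V| <= r -> `|Q| <= r -> `|Dy| <= d * r ->
  V * b = a * Q + Dy -> eta * V - eta * Q / 2 + r ^+ 2 <= 0 -> a * Q <= 2 * eta * d.
Proof.
move=> a0 b0 d0 e0 r0 ab ba /ler_normlP [V1 V2] /ler_normlP [Q1 Q2] /ler_normlP [D1 D2] e F.
have [da|ad] := leP a d.
  have hQ : eta * Q / 2 <= 2 * eta * r - r ^+ 2 by nra.
  have hQ2 : eta * Q / 2 <= eta ^+ 2 by nra.
  have : Q <= 2 * eta by nra.
  nra.
have hE : a * (V - Q) >= - (2 * d * r).
  have : a * (V - Q) = (a - b) * V + Dy by nra.
  move=> ->.
  have : `|(a - b) * V| <= d * r.
    rewrite normrM; apply: ler_pM => //; first by rewrite ler_norml; lra.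
    by rewrite ler_norml; lra.
  move/ler_normlP => [h1 h2]; lra.
have h3 : a * (eta * Q / 2) <= 2 * eta * d * r - a * r ^+ 2 by nra.
have h3' : a * (eta * Q / 2) * a <= (2 * eta * d * r - a * r ^+ 2) * a by rewrite ler_pM2r.
have sq := sqr_ge0 (a * r - eta * d).
have h4 : a * (eta * Q / 2) * a <= (eta * d) ^+ 2 by nra.
have h5 : a * Q * a <= 2 * eta * d * d by nra.
have ed := mulr_ge0 (ltW e0) d0.
have h6 : 2 * eta * d * d <= 2 * eta * d * a by nra.
by rewrite -(ler_pM2r a0); exact: le_trans h5 h6.
Qed.

Unset Implicit Arguments.

Theorem mainTheorem8 (R : realType) (X : completeNormedModType R)
  (W D : set X) (Phi : X -> \bar R) (gradPhi : X -> X -> R)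
  (hrefl : reflexive_space X)
  (hW0 : W !=set0) (hWcl : closed W) (hWcv : convex_set W)
  (hWD : W `<=` interior D)
  (hprop : proper_on D Phi) (hlsc : weakly_lsc_on D Phi)
  (hsc : strongly_convex1_on W Phi)
  (hgrad : forall y, W y -> gateaux_deriv Phi y (gradPhi y))
  (w : X) (u delta : X -> R) (eta : R)
  (hw : W w) (hu : is_dual u) (hdelta : is_dual delta)
  (hu0 : dnorm u != 0) (hud0 : dnorm (fun x => u x + delta x) != 0)
  (heta : 0 < eta)
  (w1 w2 : X)
  (hw1 : is_prox_point W Phi gradPhi w
           (fun x => (u x + delta x) / dnorm (fun y => u y + delta y)) eta w1)
  (hw2 : is_prox_point W Phi gradPhi w
           (fun x => u x / dnorm u) (eta / 2) w2) :
  u (prox_grad w w1 eta) >=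
    4^-1 * u (prox_grad w w2 (eta / 2)) - 2 * dnorm delta.
Proof.
have [hlu hcu] := hu.
have [hld hcd] := hdelta.
have bu : bnd u := dual_bounded hu.
have bd : bnd delta := dual_bounded hdelta.
have hls : lin (fun x => u x + delta x) := lin_add hlu hld.
have bs : bnd (fun x => u x + delta x) := bnd_add bu bd.
have ab := dnorm_sub_le hlu hld bu bd.
have ba := dnorm_add_le hlu hld bu bd.
have a0' := dnorm_ge0 hlu bu.
have b0' := dnorm_ge0 hls bs.
have d0 := dnorm_ge0 hld bd.
have a0 : 0 < dnorm u by rewrite lt_neqAle eq_sym hu0 a0'.
have b0 : 0 < dnorm (fun x => u x + delta x) by rewrite lt_neqAle eq_sym hud0 b0'.
move: hw1 hw2 ab ba a0' b0' a0 b0 hu0 hud0.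
set a := dnorm u; set b := dnorm (fun x => u x + delta x); set d := dnorm delta.
move=> hw1 hw2 ab ba a0' b0' a0 b0 hu0 hud0.
have hfin : forall y, W y -> Phi y \is a fin_num by move=> y wy; have [_ [? _]] := hgrad y wy.
have hG := hgrad w hw.
have hlG : lin (gradPhi w) by have [[? _] _] := hG.
set G := gradPhi w in hlG.
have hlg1 : lin (fun x => (u x + delta x) / b) by move=> c p q; rewrite hlu hld; ring.
have hlg2 : lin (fun x => u x / a) by move=> c p q; rewrite hlu; ring.
have hlh1 : lin (fun x => eta * ((u x + delta x) / b) - G x).
  by move=> c p q; rewrite hlg1 hlG; ring.
have hlh2 : lin (fun x => eta / 2 * (u x / a) - G x).
  by move=> c p q; rewrite hlg2 hlG; ring.
have [wz1 m1] := prox_real hfin hw hlG hw1.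
have [wz2 m2] := prox_real hfin hw hlG hw2.
have G1 := growth hWcv hsc hfin w1 hlh1 wz1 m1 w2 wz2.
have G2 := growth hWcv hsc hfin w2 hlh2 wz2 m2 w1 wz1.
have G3 := growth hWcv hsc hfin w2 hlh2 wz2 m2 w hw.
have GI := grad_ineq hWcv hsc hfin w2 hw wz2 hG.
rewrite -/G (linB _ _ hlG) in GI.
rewrite distrC in G1.
set r := `|w1 - w2| in G1 G2.
have r0 : 0 <= r by rewrite normr_ge0.
simpl in G1, G2, G3.
have hK : a * (u (w1 - w2) / a) <= 2 * eta * d.
  apply: (@key _ a b d eta r ((u (w1 - w2) + delta (w1 - w2)) / b) (u (w1 - w2) / a)
            (delta (w1 - w2))) => //.
  - have ib : 0 < b^-1 by rewrite invr_gt0.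
    rewrite normrM (gtr0_norm ib) ler_pdivrMr // mulrC.
    exact: (dual_le _ hls bs).
  - have ia : 0 < a^-1 by rewrite invr_gt0.
    rewrite normrM (gtr0_norm ia) ler_pdivrMr // mulrC.
    exact: (dual_le _ hlu bu).
  - exact: (dual_le _ hld bd).
  - by rewrite divfK ?gt_eqF // mulrCA mulfV ?gt_eqF // mulr1.
  - rewrite !(linB _ _ hlu) !(linB _ _ hld).
    lra.
have hK' : u w1 - u w2 <= 2 * eta * d.
  by move: hK; rewrite mulrCA mulfV ?gt_eqF // mulr1 (linB _ _ hlu).
have hP2 : u w2 / a <= u w / a.
  have sq : 0 <= `|w - w2| ^+ 2 / 2 by rewrite divr_ge0 ?exprn_ge0.
  have : eta / 2 * (u w2 / a) <= eta / 2 * (u w / a) by lra.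
  by rewrite ler_pM2l ?divr_gt0.
have hP2' : 0 <= u w - u w2.
  by rewrite subr_ge0; move: hP2; rewrite ler_pM2r ?invr_gt0.
rewrite /prox_grad !(linZ _ _ hlu) !(linB _ _ hlu).
rewrite invf_div.
set p := eta^-1.
have pe : p * eta = 1 by rewrite mulVf ?gt_eqF.
have p0 : 0 < p by rewrite invr_gt0.
have h1 := ler_wpM2l (ltW p0) hK'.
have h2 := mulr_ge0 (ltW p0) hP2'.
have -> : 2 / eta = 2 * p by [].
have h3 : p * (2 * eta * d) = 2 * d.
  by rewrite mulrC -!mulrA [d * p]mulrC [eta * (p * d)]mulrA [eta * p]mulrC pe mul1r.
rewrite h3 in h1.
nra.
Qed.
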